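(* Let $F$ be a field and $n\ge1$. For $r=\sum_i a_i\otimes b_i\in M_n(F)\otimes M_n(F)$ define $P_r\colon M_n(F)\to M_n(F)$ by $P_r(x)=\sum_i a_i x b_i$. Then the map $r\mapsto P_r$ is a bijection between the set of solutions $r\in M_n(F)\otimes M_n(F)$ of the associative Yang–Baxter equation and the set of Rota–Baxter operators of weight zero on $M_n(F)$.
   Context: A linear operator $R$ on an algebra $A$ is a Rota–Baxter operator of weight $0$ if $R(x)R(y)=R(R(x)y+xR(y))$ for all $x,y$. For an associative unital algebra $A$ and $r=\sum_i a_i\otimes b_i\in A\otimes A$, put $r_{12}=\sum a_i\otimes b_i\otimes 1$, $r_{13}=\sum a_i\otimes 1\otimes b_i$, $r_{23}=\sum 1\otimes a_i\otimes b_i$ in $A^{\otimes 3}$ (with componentwise multiplication). $r$ is a solution of the associative Yang–Baxter equation if $r_{13}r_{12}-r_{12}r_{23}+r_{23}r_{13}=0$. *)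

(* Defs.v *)
From HB Require Import structures.
From mathcomp Require Import all_boot all_order all_algebra.
Set Implicit Arguments. Unset Strict Implicit. Unset Printing Implicit Defensive.
Import GRing.Theory.
Local Open Scope ring_scope.

(* Concrete model of tensor powers of A = M_n(F), using the matrix-unit basis
   E_ij = delta_mx i j.  An index of a basis element of A is a pair (i,j).
   - tensor2: an element of A (x) A, given by its coefficients:
       r = sum_{(i,j),(k,l)} r((i,j),(k,l)) E_ij (x) E_kl.
   - tensor3: an element of A (x) A (x) A, likewise. *)
Section Tensors.
Variables (F : fieldType) (n : nat).

Definition idx := ('I_n * 'I_n)%type.
Definition tensor2 := {ffun idx * idx -> F}.
Definition tensor3 := {ffun idx * idx * idx -> F}.

Definition tens (a b : 'M[F]_n) : tensor2 :=
  [ffun p : idx * idx => a p.1.1 p.1.2 * b p.2.1 p.2.2].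

(* componentwise multiplication in A (x) A (x) A, in coordinates:
   (E_{i1 k1} (x) E_{i2 k2} (x) E_{i3 k3}) (E_{k1 j1} (x) ...) = E_{i1 j1} (x) ... *)
Definition mul3 (x y : tensor3) : tensor3 :=
  [ffun p : idx * idx * idx =>
     \sum_(k1 : 'I_n) \sum_(k2 : 'I_n) \sum_(k3 : 'I_n)
        x ((p.1.1.1, k1), (p.1.2.1, k2), (p.2.1, k3)) *
        y ((k1, p.1.1.2), (k2, p.1.2.2), (k3, p.2.2))].

Definition one_coef (p : idx) : F := (1%:M : 'M[F]_n) p.1 p.2.

Definition r12 (r : tensor2) : tensor3 :=
  [ffun p : idx * idx * idx => r (p.1.1, p.1.2) * one_coef p.2].
Definition r13 (r : tensor2) : tensor3 :=
  [ffun p : idx * idx * idx => r (p.1.1, p.2) * one_coef p.1.2].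
Definition r23 (r : tensor2) : tensor3 :=
  [ffun p : idx * idx * idx => one_coef p.1.1 * r (p.1.2, p.2)].

Definition AYBE (r : tensor2) : Prop :=
  mul3 (r13 r) (r12 r) - mul3 (r12 r) (r23 r) + mul3 (r23 r) (r13 r) = 0.

Definition P_of (r : tensor2) (x : 'M[F]_n) : 'M[F]_n :=
  \sum_(p : idx * idx)
     r p *: (delta_mx p.1.1 p.1.2 *m x *m delta_mx p.2.1 p.2.2).

Definition RB0 (R : 'M[F]_n -> 'M[F]_n) : Prop :=
  linear R /\ forall x y, R x *m R y = R (R x *m y + x *m R y).

End Tensors.

(* Main.v *)
Require Import Defs.
From HB Require Import structures.
From mathcomp Require Import all_boot all_order all_algebra.
From mathcomp Require Import ring.
Set Implicit Arguments. Unset Strict Implicit. Unset Printing Implicit Defensive.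
Import GRing.Theory.
Local Open Scope ring_scope.

Section S.
Variables (F : fieldType) (n : nat).

Lemma sum_delta (a : 'I_n) (f : 'I_n -> F) : \sum_i (a == i)%:R * f i = f a.
Proof.
rewrite (bigD1 a) //= eqxx mul1r big1 ?addr0 // => i /negbTE.
by rewrite eq_sym => ->; rewrite mul0r.
Qed.

Lemma sum_delta_r (a : 'I_n) (f : 'I_n -> F) : \sum_i f i * (i == a)%:R = f a.
Proof.
by rewrite -[RHS](sum_delta a); apply: eq_bigr => i _; rewrite mulrC eq_sym.
Qed.

Lemma sum_idx2 (G : idx n * idx n -> F) :
  \sum_p G p = \sum_i \sum_j \sum_k \sum_l G ((i,j),(k,l)).
Proof.
transitivity (\sum_(p1 : idx n) \sum_(p2 : idx n) G (p1, p2)).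
  by rewrite pair_bigA; apply: congr_big => //= -[].
transitivity (\sum_i \sum_j \sum_(p2 : idx n) G ((i,j), p2)).
  by rewrite [RHS]pair_bigA; apply: congr_big => //= -[].
apply: eq_bigr => i _; apply: eq_bigr => j _.
by rewrite [RHS]pair_bigA; apply: congr_big => //= -[].
Qed.

Lemma dxd (i j k l : 'I_n) (x : 'M[F]_n) a b :
  (delta_mx i j *m x *m delta_mx k l) a b = (a == i)%:R * x j k * (l == b)%:R.
Proof.
rewrite mxE (bigD1 k) //= big1 ?addr0.
  rewrite mxE (bigD1 j) //= big1 ?addr0.
    by rewrite !mxE !eqxx /= andbT [l == b]eq_sym.
  by move=> d /negbTE dj; rewrite mxE dj andbF /= mul0r.
by move=> c /negbTE ck; rewrite [delta_mx k l c b]mxE ck /= mulr0.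
Qed.

Lemma PE (r : tensor2 F n) x a b :
  P_of r x a b = \sum_j \sum_k r ((a,j),(k,b)) * x j k.
Proof.
rewrite /P_of summxE sum_idx2.
rewrite -[RHS](sum_delta a (fun i => \sum_j \sum_k r ((i,j),(k,b)) * x j k)).
apply: eq_bigr => i _; rewrite mulr_sumr; apply: eq_bigr => j _.
rewrite mulr_sumr; apply: eq_bigr => k _.
rewrite -(sum_delta_r b (fun l => r ((i,j),(k,l)) * x j k)) mulr_sumr.
apply: eq_bigr => l _; rewrite mxE dxd /=; ring.
Qed.


Lemma one_coefE (i k : 'I_n) : one_coef F (i, k) = (i == k)%:R.
Proof. by rewrite /one_coef mxE. Qed.

Lemma M1 (r : tensor2 F n) a j1 i2 j2 i3 b :
  mul3 (r12 r) (r23 r) ((a,j1),(i2,j2),(i3,b)) =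
  \sum_c r ((a,j1),(i2,c)) * r ((c,j2),(i3,b)).
Proof.
rewrite ffunE /=.
rewrite -[RHS](sum_delta_r j1 (fun k1 => \sum_c r ((a,k1),(i2,c)) * r ((c,j2),(i3,b)))).
apply: eq_bigr => k1 _; rewrite mulr_suml; apply: eq_bigr => k2 _.
rewrite -(sum_delta i3 (fun k3 => r ((a,k1),(i2,k2)) * r ((k2,j2),(k3,b)) * (k1 == j1)%:R)).
apply: eq_bigr => k3 _; rewrite !ffunE /= !one_coefE; ring.
Qed.

Lemma M2 (r : tensor2 F n) a j1 i2 j2 i3 b :
  mul3 (r13 r) (r12 r) ((a,j1),(i2,j2),(i3,b)) =
  \sum_c r ((a,c),(i3,b)) * r ((c,j1),(i2,j2)).
Proof.
rewrite ffunE /=; apply: eq_bigr => k1 _.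
rewrite -(sum_delta i2 (fun k2 => r ((a,k1),(i3,b)) * r ((k1,j1),(k2,j2)))).
apply: eq_bigr => k2 _.
rewrite -(sum_delta_r b (fun k3 => (i2 == k2)%:R * (r ((a,k1),(i3,k3)) * r ((k1,j1),(k2,j2))))).
apply: eq_bigr => k3 _; rewrite !ffunE /= !one_coefE; ring.
Qed.

Lemma M3 (r : tensor2 F n) a j1 i2 j2 i3 b :
  mul3 (r23 r) (r13 r) ((a,j1),(i2,j2),(i3,b)) =
  \sum_c r ((i2,j2),(i3,c)) * r ((a,j1),(c,b)).
Proof.
rewrite ffunE /=.
rewrite -[RHS](sum_delta a (fun k1 => \sum_c r ((i2,j2),(i3,c)) * r ((k1,j1),(c,b)))).
apply: eq_bigr => k1 _.
rewrite -(sum_delta_r j2 (fun k2 => (a == k1)%:R * \sum_c r ((i2,k2),(i3,c)) * r ((k1,j1),(c,b)))).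
apply: eq_bigr => k2 _; rewrite mulr_sumr mulr_suml; apply: eq_bigr => k3 _.
rewrite !ffunE /= !one_coefE; ring.
Qed.

Definition phi (t : tensor3 F n) (x y : 'M[F]_n) (a b : 'I_n) : F :=
  \sum_j1 \sum_i2 \sum_j2 \sum_i3 t ((a,j1),(i2,j2),(i3,b)) * x j1 i2 * y j2 i3.

Lemma rot3 (G : 'I_n -> 'I_n -> 'I_n -> F) :
  \sum_a \sum_b \sum_c G a b c = \sum_b \sum_c \sum_a G a b c.
Proof. rewrite exchange_big; apply: eq_bigr => b _; exact: exchange_big. Qed.

Lemma rot4 (G : 'I_n -> 'I_n -> 'I_n -> 'I_n -> F) :
  \sum_a \sum_b \sum_c \sum_d G a b c d = \sum_b \sum_c \sum_d \sum_a G a b c d.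
Proof.
rewrite exchange_big; apply: eq_bigr => b _; exact: (rot3 (fun a c d => G a b c d)).
Qed.

Lemma rot5 (G : 'I_n -> 'I_n -> 'I_n -> 'I_n -> 'I_n -> F) :
  \sum_a \sum_b \sum_c \sum_d \sum_e G a b c d e =
  \sum_b \sum_c \sum_d \sum_e \sum_a G a b c d e.
Proof.
rewrite exchange_big; apply: eq_bigr => b _; exact: (rot4 (fun a c d e => G a b c d e)).
Qed.

Lemma sum22 (A B : 'I_n -> 'I_n -> F) :
  (\sum_i \sum_j A i j) * (\sum_k \sum_l B k l) =
  \sum_i \sum_j \sum_k \sum_l A i j * B k l.
Proof.
rewrite big_distrl; apply: eq_bigr => i _; rewrite big_distrl; apply: eq_bigr => j _.
rewrite big_distrr; apply: eq_bigr => k _; by rewrite big_distrr.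
Qed.

Lemma T1 (r : tensor2 F n) x y a b :
  (P_of r x *m P_of r y) a b = phi (mul3 (r12 r) (r23 r)) x y a b.
Proof.
rewrite mxE /phi.
transitivity (\sum_c \sum_j1 \sum_i2 \sum_j2 \sum_i3
   r ((a,j1),(i2,c)) * x j1 i2 * (r ((c,j2),(i3,b)) * y j2 i3)).
  by apply: eq_bigr => c _; rewrite !PE sum22.
rewrite rot5; apply: eq_bigr => j1 _; apply: eq_bigr => i2 _.
apply: eq_bigr => j2 _; apply: eq_bigr => i3 _.
rewrite M1 !big_distrl; apply: eq_bigr => c _ /=; ring.
Qed.

Lemma T2 (r : tensor2 F n) x y a b :
  P_of r (P_of r x *m y) a b = phi (mul3 (r13 r) (r12 r)) x y a b.
Proof.
rewrite PE /phi.
transitivity (\sum_j \sum_k \sum_c \sum_j1 \sum_i2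
   r ((a,j),(k,b)) * (r ((j,j1),(i2,c)) * x j1 i2) * y c k).
  apply: eq_bigr => j _; apply: eq_bigr => k _.
  rewrite mxE mulr_sumr; apply: eq_bigr => c _.
  rewrite PE big_distrl mulr_sumr; apply: eq_bigr => j1 _.
  rewrite big_distrl mulr_sumr; apply: eq_bigr => i2 _; exact: mulrA.
rewrite rot5 rot4 rot3; apply: eq_bigr => j1 _; apply: eq_bigr => i2 _.
apply: eq_bigr => j2 _; apply: eq_bigr => i3 _.
rewrite M2 !big_distrl; apply: eq_bigr => c _ /=; ring.
Qed.

Lemma T3 (r : tensor2 F n) x y a b :
  P_of r (x *m P_of r y) a b = phi (mul3 (r23 r) (r13 r)) x y a b.
Proof.
rewrite PE /phi.
transitivity (\sum_j \sum_k \sum_c \sum_j2 \sum_i3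
   r ((a,j),(k,b)) * (x j c * (r ((c,j2),(i3,k)) * y j2 i3))).
  apply: eq_bigr => j _; apply: eq_bigr => k _.
  rewrite mxE mulr_sumr; apply: eq_bigr => c _.
  rewrite PE mulr_sumr mulr_sumr; apply: eq_bigr => j2 _.
  by rewrite mulr_sumr mulr_sumr.
apply: eq_bigr => j1 _; rewrite rot4; apply: eq_bigr => i2 _.
apply: eq_bigr => j2 _; apply: eq_bigr => i3 _.
rewrite M3 !big_distrl; apply: eq_bigr => c _ /=; ring.
Qed.

Lemma P_lin (r : tensor2 F n) : linear (P_of r).
Proof.
move=> c u v; apply/matrixP => a b.
rewrite [RHS]mxE [in RHS]mxE !PE mulr_sumr -big_split; apply: eq_bigr => j _.
rewrite mulr_sumr -big_split; apply: eq_bigr => k _ /=.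
rewrite !mxE; ring.
Qed.

Lemma P_add (r : tensor2 F n) u v : P_of r (u + v) = P_of r u + P_of r v.
Proof. by have := P_lin r 1 u v; rewrite !scale1r. Qed.

Lemma ffun3E (t1 t2 t3 : tensor3 F n) p : (t1 - t2 + t3) p = t1 p - t2 p + t3 p.
Proof. by rewrite !ffunE. Qed.

Lemma phi_lin (t1 t2 t3 : tensor3 F n) x y a b :
  phi (t1 - t2 + t3) x y a b = phi t1 x y a b - phi t2 x y a b + phi t3 x y a b.
Proof.
rewrite /phi -sumrB -big_split; apply: eq_bigr => j1 _.
rewrite -sumrB -big_split; apply: eq_bigr => i2 _.
rewrite -sumrB -big_split; apply: eq_bigr => j2 _.
rewrite -sumrB -big_split; apply: eq_bigr => i3 _ /=.
rewrite ffun3E; ring.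
Qed.

Definition aybe (r : tensor2 F n) : tensor3 F n :=
  mul3 (r13 r) (r12 r) - mul3 (r12 r) (r23 r) + mul3 (r23 r) (r13 r).

Lemma key (r : tensor2 F n) x y a b :
  (P_of r x *m P_of r y) a b - P_of r (P_of r x *m y + x *m P_of r y) a b
  = - phi (aybe r) x y a b.
Proof.
rewrite P_add [X in _ - X = _]mxE T1 T2 T3 /aybe phi_lin; ring.
Qed.

Lemma phi0 x y a b : phi 0 x y a b = 0.
Proof.
rewrite /phi big1 // => j1 _; rewrite big1 // => i2 _; rewrite big1 // => j2 _.
by rewrite big1 // => i3 _; rewrite ffunE !mul0r.
Qed.

Lemma sum2_delta (f : 'I_n -> 'I_n -> F) j k :
  \sum_j' \sum_k' f j' k' * (delta_mx j k : 'M[F]_n) j' k' = f j k.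
Proof.
transitivity (\sum_j' (\sum_k' f j' k' * (k' == k)%:R) * (j' == j)%:R).
  apply: eq_bigr => j' _; rewrite mulr_suml; apply: eq_bigr => k' _.
  rewrite mxE; case: (j' == j); case: (k' == k) => /=; ring.
rewrite (eq_bigr (fun j' => f j' k * (j' == j)%:R)) ?sum_delta_r // => j' _.
by rewrite sum_delta_r.
Qed.

Lemma PEdelta (r : tensor2 F n) j k a b :
  P_of r (delta_mx j k) a b = r ((a,j),(k,b)).
Proof. by rewrite PE (sum2_delta (fun j' k' => r ((a,j'),(k',b)))). Qed.

Lemma phi_delta (t : tensor3 F n) j1 i2 j2 i3 a b :
  phi t (delta_mx j1 i2) (delta_mx j2 i3) a b = t ((a,j1),(i2,j2),(i3,b)).
Proof.
rewrite /phi.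
transitivity (\sum_j1' \sum_i2' (\sum_j2' \sum_i3'
    t ((a,j1'),(i2',j2'),(i3',b)) * (delta_mx j2 i3 : 'M[F]_n) j2' i3')
   * (delta_mx j1 i2 : 'M[F]_n) j1' i2').
  apply: eq_bigr => j1' _; apply: eq_bigr => i2' _.
  rewrite big_distrl; apply: eq_bigr => j2' _.
  rewrite big_distrl; apply: eq_bigr => i3' _ /=; ring.
rewrite (sum2_delta (fun j1' i2' => \sum_j2' \sum_i3'
    t ((a,j1'),(i2',j2'),(i3',b)) * (delta_mx j2 i3 : 'M[F]_n) j2' i3')).
by rewrite (sum2_delta (fun j2' i3' => t ((a,j1),(i2,j2'),(i3',b)))).
Qed.
End S.

Theorem theorem4 (F : fieldType) (n : nat) (hn : (0 < n)%N) :
  (* r |-> P_r maps AYBE solutions to weight-0 Rota-Baxter operators *)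
  (forall r : tensor2 F n, AYBE r -> RB0 (P_of r)) /\
  (* injective on AYBE solutions *)
  (forall r1 r2 : tensor2 F n, AYBE r1 -> AYBE r2 -> P_of r1 =1 P_of r2 -> r1 = r2) /\
  (* surjective onto weight-0 Rota-Baxter operators *)
  (forall R : 'M[F]_n -> 'M[F]_n, RB0 R -> exists r : tensor2 F n, AYBE r /\ P_of r =1 R).
Proof.
split; [|split].
- move=> r H; split; first exact: P_lin.
  move=> x y; apply/matrixP => a b; apply/eqP; rewrite -subr_eq0 key.
  by rewrite (H : aybe r = 0) phi0 oppr0.
- move=> r1 r2 _ _ HP; apply/ffunP => -[[a j] [k b]].
  by rewrite -PEdelta HP PEdelta.
- move=> R [HlinR HRB].
  have Radd u v : R (u + v) = R u + R v by have := HlinR 1 u v; rewrite !scale1r.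
  have R0 : R 0 = 0.
    by have h := Radd 0 0; rewrite addr0 in h; apply: (addrI (R 0)); rewrite addr0 -h.
  have RZ c u : R (c *: u) = c *: R u by have := HlinR c u 0; rewrite R0 !addr0.
  have Rsum (I : Type) (s : seq I) (f : I -> 'M[F]_n) :
      R (\sum_(i <- s) f i) = \sum_(i <- s) R (f i).
    by apply: (big_rec2 (fun u v => R u = v)) => // i y1 y2 _ <-; exact: Radd.
  pose r := [ffun p : idx n * idx n => R (delta_mx p.1.2 p.2.1) p.1.1 p.2.2].
  have HP : P_of r =1 R.
    move=> x; apply/matrixP => a b; rewrite PE [in RHS](matrix_sum_delta x).
    rewrite Rsum summxE; apply: eq_bigr => j _; rewrite Rsum summxE.
    by apply: eq_bigr => k _; rewrite RZ mxE ffunE /= mulrC.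
  exists r; split => //.
  apply/ffunP => -[[[a j1] [i2 j2]] [i3 b]].
  rewrite [RHS]ffunE -/(aybe r) -(phi_delta (aybe r) j1 i2 j2 i3 a b).
  by apply/eqP; rewrite -oppr_eq0 -key !HP HRB subrr.
Qed.
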